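(* Let $X$ be a CAT(0) Euclidean polygonal complex and let $x,y,z\in X$. Then the geodesic triangle $\triangle(x,y,z)$ is (homeomorphic to) a spiky triangle.
   Context: A CAT(0) Euclidean polygonal complex is a 2-dimensional polygonal complex whose cells are convex Euclidean polygons, with its induced length metric, assumed CAT(0). $\overline{ab}$ denotes the unique geodesic between $a,b$; $\triangle(x,y,z)=\overline{xy}\cup\overline{yz}\cup\overline{zx}$. A spiky triangle is the topological space obtained by gluing a possibly degenerate interval at one endpoint to each of the three vertices of the boundary of a possibly degenerate Euclidean triangle. *)

(* Defs.v *)
From Stdlib Require Import Reals List.
Open Scope R_scope.

Definition R2 : Type := (R * R)%type.
Definition R3 : Type := (R * R * R)%type.

Definition dist2 (p q : R2) : R :=
  sqrt ((fst p - fst q)^2 + (snd p - snd q)^2).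

Definition dot2 (u p : R2) : R := fst u * fst p + snd u * snd p.

Definition interp2 (a b : R2) (th : R) : R2 :=
  (fst a + th * (fst b - fst a), snd a + th * (snd b - snd a)).

Definition seg2 (a b : R2) (v : R2) : Prop :=
  exists th, 0 <= th <= 1 /\ v = interp2 a b th.

Definition is_metric {X : Type} (d : X -> X -> R) : Prop :=
  (forall x y, 0 <= d x y) /\ (forall x, d x x = 0) /\
  (forall x y, d x y = 0 -> x = y) /\ (forall x y, d x y = d y x) /\
  (forall x y z, d x z <= d x y + d y z).

Definition cont_on {A B : Type} (dA : A -> A -> R) (dB : B -> B -> R)
  (f : A -> B) (S : A -> Prop) : Prop :=
  forall a, S a -> forall e, 0 < e -> exists del, 0 < del /\
    forall a', S a' -> dA a a' < del -> dB (f a) (f a') < e.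

Definition geodesic {X : Type} (d : X -> X -> R) (x y : X) (g : R -> X) : Prop :=
  g 0 = x /\ g 1 = y /\
  forall s t, 0 <= s <= 1 -> 0 <= t <= 1 -> d (g s) (g t) = Rabs (s - t) * d x y.

Definition geodesic_space {X : Type} (d : X -> X -> R) : Prop :=
  is_metric d /\ forall x y, exists g, geodesic d x y g.

Definition CAT0 {X : Type} (d : X -> X -> R) : Prop :=
  geodesic_space d /\
  forall (x y z : X) (g1 g2 g3 : R -> X),
    geodesic d x y g1 -> geodesic d y z g2 -> geodesic d z x g3 ->
    forall xb yb zb : R2,
      dist2 xb yb = d x y -> dist2 yb zb = d y z -> dist2 zb xb = d z x ->
      let side (k : nat) : (R -> X) * (R2 * R2) :=
        match k with
        | O => (g1, (xb, yb))
        | S O => (g2, (yb, zb))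
        | _ => (g3, (zb, xb))
        end in
      forall (k m : nat) (s t : R), 0 <= s <= 1 -> 0 <= t <= 1 ->
        d (fst (side k) s) (fst (side m) t)
        <= dist2 (interp2 (fst (snd (side k))) (snd (snd (side k))) s)
                 (interp2 (fst (snd (side m))) (snd (snd (side m))) t).

(** the geodesic segment \overline{ab} (as a set; unique in a CAT(0) space) *)
Definition geod_seg {X : Type} (d : X -> X -> R) (a b : X) (p : X) : Prop :=
  exists g th, geodesic d a b g /\ 0 <= th <= 1 /\ p = g th.

Definition geod_triangle {X : Type} (d : X -> X -> R) (x y z : X) (p : X) : Prop :=
  geod_seg d x y p \/ geod_seg d y z p \/ geod_seg d z x p.

Fixpoint lincomb (w : list R) (vs : list R2) : R2 :=
  match w, vs with
  | a :: w', v :: vs' =>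
      let r := lincomb w' vs' in (a * fst v + fst r, a * snd v + snd r)
  | _, _ => (0, 0)
  end.

Definition conv_hull (vs : list R2) (p : R2) : Prop :=
  exists w : list R, length w = length vs /\ Forall (fun a => 0 <= a) w /\
    fold_right Rplus 0 w = 1 /\ p = lincomb w vs.

(** a convex Euclidean polygon: convex hull of finitely many points,
    with nonempty interior (i.e. 2-dimensional) *)
Definition convex_polygon (P : R2 -> Prop) : Prop :=
  (exists vs : list R2, forall p, P p <-> conv_hull vs p) /\
  (exists c r, 0 < r /\ forall p, dist2 c p < r -> P p).

(** faces of a convex polygon: the polygon itself, or its intersection with a
    supporting line (vertices, edges; possibly empty) *)
Definition face (P F : R2 -> Prop) : Prop :=
  (forall p, F p <-> P p) \/
  exists (u : R2) (c : R), u <> (0, 0) /\ (forall p, P p -> dot2 u p <= c) /\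
    (forall p, F p <-> (P p /\ dot2 u p = c)).

(** * Euclidean polygonal complexes (M_0-polyhedral complexes of dimension 2,
    all of whose cells are convex Euclidean polygons, Bridson–Haefliger I.7.37),
    with the metric d being the induced (intrinsic) length metric. *)

(** an m-string from x to y: consecutive points lie in a common cell; each step
    (i, p, q) is the Euclidean segment from p to q inside the cell P i *)
Fixpoint is_string {X I : Type} (P : I -> R2 -> Prop) (phi : I -> R2 -> X)
  (x y : X) (s : list (I * R2 * R2)) : Prop :=
  match s with
  | nil => x = y
  | (i, p, q) :: s' =>
      P i p /\ P i q /\ phi i p = x /\ is_string P phi (phi i q) y s'
  end.

Fixpoint string_length {I : Type} (s : list (I * R2 * R2)) : R :=
  match s with
  | nil => 0
  | (_, p, q) :: s' => dist2 p q + string_length s'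
  end.

Definition polygonal_complex {X I : Type} (d : X -> X -> R)
  (P : I -> R2 -> Prop) (phi : I -> R2 -> X) : Prop :=
  (forall i, convex_polygon (P i)) /\
  (forall i p q, P i p -> P i q -> phi i p = phi i q -> p = q) /\
  (forall x, exists i p, P i p /\ phi i p = x) /\
  (forall i j p q, P i p -> P j q -> phi i p = phi j q ->
     exists (T T' : R2 -> Prop) (h : R2 -> R2),
       face (P i) T /\ face (P j) T' /\ T p /\ T' q /\
       (forall v, T v -> T' (h v) /\ phi j (h v) = phi i v) /\
       (forall v v', T v -> T v' -> dist2 (h v) (h v') = dist2 v v') /\
       (forall v', T' v' -> exists v, T v /\ h v = v')) /\
  is_metric d /\
  (forall x y,
     (forall s, is_string P phi x y s -> d x y <= string_length s) /\
     (forall e, 0 < e -> exists s, is_string P phi x y s /\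
                                  string_length s < d x y + e)).

(** * Spiky triangles
    Concrete model inside R^2 x R^3: the boundary [a,b] ∪ [b,c] ∪ [c,a] of a
    (possibly degenerate) triangle lies in R^2 x {0}; the interval of length
    l1 (resp. l2, l3) is glued at a (resp. b, c) and points in the direction
    of the first (resp. second, third) coordinate axis of R^3. *)
Definition dist5 (u v : R2 * R3) : R :=
  let '((p1, p2), (q1, q2, q3)) := u in
  let '((p1', p2'), (q1', q2', q3')) := v in
  sqrt ((p1 - p1')^2 + (p2 - p2')^2 + (q1 - q1')^2 + (q2 - q2')^2 + (q3 - q3')^2).

Definition spiky_triangle (a b c : R2) (l1 l2 l3 : R) (u : R2 * R3) : Prop :=
  ((seg2 a b (fst u) \/ seg2 b c (fst u) \/ seg2 c a (fst u)) /\ snd u = (0, 0, 0))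
  \/ (exists t, 0 <= t <= l1 /\ u = (a, (t, 0, 0)))
  \/ (exists t, 0 <= t <= l2 /\ u = (b, (0, t, 0)))
  \/ (exists t, 0 <= t <= l3 /\ u = (c, (0, 0, t))).

Definition homeomorphic_to_spiky_triangle {X : Type} (d : X -> X -> R)
  (T : X -> Prop) : Prop :=
  exists (a b c : R2) (l1 l2 l3 : R), 0 <= l1 /\ 0 <= l2 /\ 0 <= l3 /\
  exists (f : X -> R2 * R3) (g : R2 * R3 -> X),
    (forall p, T p -> spiky_triangle a b c l1 l2 l3 (f p) /\ g (f p) = p) /\
    (forall u, spiky_triangle a b c l1 l2 l3 u -> T (g u) /\ f (g u) = u) /\
    cont_on d dist5 f T /\
    cont_on dist5 d g (spiky_triangle a b c l1 l2 l3).

(* Main.v *)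
Require Import Defs.
From Stdlib Require Import Reals List Lra Psatz ClassicalEpsilon Classical.
Open Scope R_scope.

Lemma div_range s D : 0 <= s <= D -> D <> 0 -> 0 <= s / D <= 1.
Proof.
  intros Hs HD. assert (HD' : 0 < D) by lra.
  assert (E : s / D * D = s) by (field; lra).
  split; nra.
Qed.

Definition arc {X : Type} (g : R -> X) (D s : R) : X := g (s / D).

Lemma arc_iso {X : Type} (d : X -> X -> R) x y g s s' :
  is_metric d -> geodesic d x y g -> 0 <= s <= d x y -> 0 <= s' <= d x y ->
  d (arc g (d x y) s) (arc g (d x y) s') = Rabs (s - s').
Proof.
  intros Hm (H0 & H1 & Hg) Hs Hs'.
  destruct Hm as (Hpos & Hxx & Hsep & Hsym & Htri).
  destruct (Req_dec (d x y) 0) as [HD|HD].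
  - assert (s = 0) by lra. assert (s' = 0) by lra. subst. unfold arc.
    rewrite Hxx. replace (0-0) with 0 by ring. now rewrite Rabs_R0.
  - unfold arc. rewrite Hg by (apply div_range; auto).
    assert (HD' : 0 < d x y) by (specialize (Hpos x y); lra).
    replace (s / d x y - s' / d x y) with ((s - s') * / d x y) by (field; lra).
    rewrite Rabs_mult, Rabs_inv, (Rabs_right (d x y)) by lra. field; lra.
Qed.

Lemma geod_unique {X : Type} (d : X -> X -> R) a b g1 g2 t :
  CAT0 d -> geodesic d a b g1 -> geodesic d a b g2 -> 0 <= t <= 1 -> g1 t = g2 t.
Proof.
  intros [[Hm _] Hc] H1 H2 Ht.
  pose proof Hm as (Hpos & Hxx & Hsep & Hsym & Htri).
  assert (G2 : geodesic d b a (fun t => g2 (1 - t))).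
  { destruct H2 as (A0 & A1 & Ag). split; [|split].
    - replace (1-0) with 1 by ring; auto.
    - replace (1-1) with 0 by ring; auto.
    - intros s u Hs Hu. rewrite Ag by lra. rewrite Hsym. f_equal.
      replace (1 - s - (1 - u)) with (- (s - u)) by ring. apply Rabs_Ropp. }
  assert (G3 : geodesic d a a (fun _ => a)).
  { split; [|split]; auto. intros. rewrite !Hxx. ring. }
  assert (Hdp : forall D, 0 <= D -> dist2 (0,0) (D,0) = D).
  { intros D HD. unfold dist2; cbn [fst snd]. replace ((0 - D) ^ 2 + (0 - 0) ^ 2) with (D^2) by ring.
    apply sqrt_pow2; auto. }
  assert (Hdq : forall D, 0 <= D -> dist2 (D,0) (0,0) = D).
  { intros D HD. unfold dist2; cbn [fst snd]. replace ((D - 0) ^ 2 + (0 - 0) ^ 2) with (D^2) by ring.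
    apply sqrt_pow2; auto. }
  specialize (Hc a b a g1 (fun t => g2 (1-t)) (fun _ => a) H1 G2 G3 (0,0) (d a b,0) (0,0)
    (Hdp _ (Hpos a b))).
  rewrite Hsym in Hc at 1. specialize (Hc (Hdq _ (Hpos b a))).
  assert (E0 : dist2 (0,0) (0,0) = d a a).
  { rewrite Hxx. unfold dist2; cbn [fst snd]. replace ((0 - 0) ^ 2 + (0 - 0) ^ 2) with 0 by ring.
    apply sqrt_0. }
  specialize (Hc E0 O (S O) t (1 - t) Ht ltac:(lra)). simpl in Hc.
  replace (1 - (1 - t)) with t in Hc by ring.
  apply Hsep. apply Rle_antisym; [|apply Hpos].
  eapply Rle_trans; [apply Hc|].
  unfold dist2, interp2; cbn [fst snd].
  replace ((0 + t * (d a b - 0) - (d a b + (1 - t) * (0 - d a b))) ^ 2 +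
    (0 + t * (0 - 0) - (0 + (1 - t) * (0 - 0))) ^ 2) with 0 by ring.
  rewrite sqrt_0; lra.
Qed.

Lemma rev_geod {X : Type} (d : X -> X -> R) x y g :
  is_metric d -> geodesic d x y g -> geodesic d y x (fun t => g (1 - t)).
Proof.
  intros (Hpos & Hxx & Hsep & Hsym & Htri) (A0 & A1 & Ag). split; [|split].
  - replace (1-0) with 1 by ring; auto.
  - replace (1-1) with 0 by ring; auto.
  - intros s u Hs Hu. rewrite Ag by lra. rewrite Hsym. f_equal.
    replace (1 - s - (1 - u)) with (- (s - u)) by ring. apply Rabs_Ropp.
Qed.

Lemma arc0 {X : Type} (g : R -> X) D : arc g D 0 = g 0.
Proof. unfold arc. f_equal. unfold Rdiv. ring. Qed.

Lemma arc_rev {X : Type} (d : X -> X -> R) z x g s :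
  is_metric d -> geodesic d z x g -> 0 <= s <= d z x ->
  arc g (d z x) s = arc (fun t => g (1 - t)) (d z x) (d z x - s).
Proof.
  intros Hm (A0 & A1 & Ag) Hs. pose proof Hm as (Hpos & Hxx & Hsep & Hsym & Htri).
  unfold arc. destruct (Req_dec (d z x) 0) as [HD|HD].
  - assert (s = 0) by lra. subst s. rewrite HD.
    replace ((0 - 0)/0) with 0 by (unfold Rdiv; ring). replace (1-0) with 1 by ring.
    replace (0/0) with 0 by (unfold Rdiv; ring). rewrite A0, A1. now apply Hsep.
  - f_equal. field. auto.
Qed.

Lemma arc_dist0 {X : Type} (d : X -> X -> R) x y g s :
  is_metric d -> geodesic d x y g -> 0 <= s <= d x y -> d x (arc g (d x y) s) = s.
Proof.
  intros Hm Hg Hs. pose proof Hg as (A0 & _).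
  rewrite <- A0 at 1. rewrite <- (arc0 g (d x y)).
  rewrite (arc_iso d x y g 0 s Hm Hg) by (pose proof (proj1 Hm x y); lra).
  replace (0 - s) with (- s) by ring. rewrite Rabs_Ropp. apply Rabs_right. lra.
Qed.

Lemma sub_geod {X : Type} (d : X -> X -> R) v y g r0 :
  is_metric d -> geodesic d v y g -> 0 <= r0 <= d v y ->
  geodesic d v (arc g (d v y) r0) (fun t => arc g (d v y) (t * r0)).
Proof.
  intros Hm Hg Hr. pose proof Hg as (A0 & A1 & Ag). split; [|split].
  - rewrite Rmult_0_l, arc0. auto.
  - now rewrite Rmult_1_l.
  - intros s t Hs Ht. rewrite (arc_iso d v y g) by (auto; nra).
    rewrite arc_dist0 by auto.
    replace (s * r0 - t * r0) with ((s - t) * r0) by ring.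
    rewrite Rabs_mult, (Rabs_right r0) by lra. ring.
Qed.

Definition spike_set {X : Type} (g h : R -> X) (Dy Dz : R) (r : R) : Prop :=
  0 <= r <= Rmin Dy Dz /\ arc g Dy r = arc h Dz r.

Definition spike {X : Type} (g h : R -> X) (Dy Dz : R) : R :=
  epsilon (inhabits 0) (fun a => is_lub (spike_set g h Dy Dz) a).

Lemma spike_lub {X : Type} (g h : R -> X) Dy Dz :
  0 <= Dy -> 0 <= Dz -> g 0 = h 0 -> is_lub (spike_set g h Dy Dz) (spike g h Dy Dz).
Proof.
  intros Hy Hz H0. unfold spike. apply epsilon_spec.
  destruct (completeness (spike_set g h Dy Dz)) as [m Hm].
  - exists (Rmin Dy Dz). intros r [Hr _]. lra.
  - exists 0. split. split; [lra|]. apply Rmin_glb; lra. now rewrite !arc0.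
  - now exists m.
Qed.

Lemma spike_init {X : Type} (d : X -> X -> R) v y z g h r0 r :
  CAT0 d -> geodesic d v y g -> geodesic d v z h ->
  spike_set g h (d v y) (d v z) r0 -> 0 <= r <= r0 ->
  spike_set g h (d v y) (d v z) r.
Proof.
  intros Hc Hg Hh [Hr0 E] Hr.
  assert (Hm : is_metric d) by apply Hc.
  pose proof (Rmin_l (d v y) (d v z)). pose proof (Rmin_r (d v y) (d v z)).
  split; [lra|].
  destruct (Req_dec r0 0) as [Z|Z].
  - assert (r = 0) by lra. subst. now rewrite !arc0, (proj1 Hg), (proj1 Hh).
  - pose proof (sub_geod d v y g r0 Hm Hg ltac:(lra)) as G.
    pose proof (sub_geod d v z h r0 Hm Hh ltac:(lra)) as HH.
    rewrite <- E in HH.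
    pose proof (geod_unique d _ _ _ _ (r / r0) Hc G HH) as U.
    cbv beta in U. replace (r / r0 * r0) with r in U by (field; auto).
    apply U. apply div_range; lra.
Qed.

Lemma corner {X : Type} (d : X -> X -> R) v y z g h :
  CAT0 d -> geodesic d v y g -> geodesic d v z h ->
  (0 <= spike g h (d v y) (d v z) /\ spike g h (d v y) (d v z) <= d v y /\
   spike g h (d v y) (d v z) <= d v z) /\
  forall r r', 0 <= r <= d v y -> 0 <= r' <= d v z ->
   (arc g (d v y) r = arc h (d v z) r' <-> r = r' /\ r <= spike g h (d v y) (d v z)).
Proof.
  intros Hc Hg Hh.
  assert (Hm : is_metric d) by apply Hc.
  pose proof Hm as (Hpos & Hxx & Hsep & Hsym & Htri).
  pose proof (Rmin_l (d v y) (d v z)). pose proof (Rmin_r (d v y) (d v z)).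
  assert (L : is_lub (spike_set g h (d v y) (d v z)) (spike g h (d v y) (d v z))).
  { apply spike_lub; auto. now rewrite (proj1 Hg), (proj1 Hh). }
  set (a := spike g h (d v y) (d v z)) in *.
  destruct L as [Lu Ll].
  assert (Ha0 : 0 <= a).
  { apply Lu. split. split; [lra|]. apply Rmin_glb; auto. now rewrite !arc0, (proj1 Hg), (proj1 Hh). }
  assert (Ham : a <= Rmin (d v y) (d v z)).
  { apply Ll. intros r [Hr _]. lra. }
  split; [lra|].
  intros r r' Hr Hr'. split.
  - intros E.
    assert (r = r').
    { rewrite <- (arc_dist0 d v y g r Hm Hg Hr), <- (arc_dist0 d v z h r' Hm Hh Hr'). now rewrite E. }
    subst r'. split; auto. apply Lu. split; auto. split; [lra|]. apply Rmin_glb; lra.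
  - intros [<- Hra]. apply Hsep.
    apply Rle_antisym; [|apply Hpos].
    assert (forall eps, 0 < eps -> d (arc g (d v y) r) (arc h (d v z) r) <= 2 * eps).
    { intros eps He.
      destruct (classic (exists r0, spike_set g h (d v y) (d v z) r0 /\ r - eps < r0)) as [[r0 [S0 Hr0]]|Hn].
      - destruct (Rle_lt_dec r r0).
        + destruct (spike_init d v y z g h r0 r Hc Hg Hh S0 ltac:(lra)) as [_ E].
          rewrite E, Hxx. lra.
        + destruct S0 as [B0 E0].
          eapply Rle_trans; [apply (Htri _ (arc g (d v y) r0))|].
          eapply Rle_trans; [apply Rplus_le_compat_l, (Htri _ (arc h (d v z) r0))|].
          rewrite (arc_iso d v y g) by (auto; lra).
          rewrite E0, Hxx.
          rewrite (arc_iso d v z h) by (auto; lra).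
          rewrite (Rabs_right (r - r0)) by lra. rewrite (Rabs_left (r0 - r)) by lra. lra.
      - exfalso. assert (a <= r - eps); [|lra].
        apply Ll. intros x Hx. destruct (Rle_lt_dec x (r - eps)); auto.
        exfalso; apply Hn; exists x; split; auto; lra. }
    destruct (Rle_lt_dec (d (arc g (d v y) r) (arc h (d v z) r)) 0); auto.
    specialize (H1 (d (arc g (d v y) r) (arc h (d v z) r) / 4) ltac:(lra)). lra.
Qed.

Definition sel3 {A : Type} (a b c : A) (k : nat) : A :=
  match k with O => a | S O => b | _ => c end.

Record corners {X : Type} (G1 G2 G3 : R -> X) (D1 D2 D3 a b c : R) : Prop := {
  cb : 0 <= a /\ a <= D1 /\ a <= D3 /\ 0 <= b /\ b <= D1 /\ b <= D2 /\
       0 <= c /\ c <= D2 /\ c <= D3;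
  cx : forall s s', 0 <= s <= D3 -> 0 <= s' <= D1 -> (G3 s = G1 s' <-> s' = D3 - s /\ s' <= a);
  cy : forall s s', 0 <= s <= D1 -> 0 <= s' <= D2 -> (G1 s = G2 s' <-> s' = D1 - s /\ s' <= b);
  cz : forall s s', 0 <= s <= D2 -> 0 <= s' <= D3 -> (G2 s = G3 s' <-> s' = D2 - s /\ s' <= c)
}.

Lemma corners_rot {X : Type} (G1 G2 G3 : R -> X) D1 D2 D3 a b c :
  corners G1 G2 G3 D1 D2 D3 a b c -> corners G2 G3 G1 D2 D3 D1 b c a.
Proof.
  intros [B X1 Y1 Z1]. split; auto. lra.
Qed.

Lemma corners_C3 {X : Type} (G1 G2 G3 : R -> X) D1 D2 D3 a b c :
  corners G1 G2 G3 D1 D2 D3 a b c -> a + b <= D1.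
Proof.
  intros [B X1 Y1 Z1].
  destruct (Rle_lt_dec (a + b) D1) as [|Hlt]; auto. exfalso.
  set (t := D1 - b).
  assert (E1 : G3 (D3 - t) = G1 t) by (apply X1; unfold t; lra).
  assert (E2 : G1 t = G2 b) by (apply Y1; unfold t; lra).
  assert (E3 : G2 b = G3 (D3 - t)) by congruence.
  apply Z1 in E3; [|unfold t; lra|unfold t; lra].
  assert (F1 : G3 (D3 - a) = G1 a) by (apply X1; lra).
  assert (F2 : G1 a = G2 (D1 - a)) by (apply Y1; lra).
  assert (F3 : G2 (D1 - a) = G3 (D3 - a)) by congruence.
  apply Z1 in F3; [|lra|lra].
  unfold t in *. lra.
Qed.

Lemma corners_C4 {X : Type} (G1 G2 G3 : R -> X) D1 D2 D3 a b c :
  corners G1 G2 G3 D1 D2 D3 a b c -> a + b = D1 -> b + c = D2.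
Proof.
  intros C H. pose proof (corners_C3 _ _ _ _ _ _ _ _ _ (corners_rot _ _ _ _ _ _ _ _ _ C)).
  destruct C as [B X1 Y1 Z1].
  assert (F1 : G3 (D3 - a) = G1 a) by (apply X1; lra).
  assert (F2 : G1 a = G2 b) by (apply Y1; lra).
  assert (F3 : G2 b = G3 (D3 - a)) by congruence.
  apply Z1 in F3; [|lra|lra]. lra.
Qed.

Lemma corners_class {X : Type} (G1 G2 G3 : R -> X) D1 D2 D3 a b c :
  corners G1 G2 G3 D1 D2 D3 a b c ->
  (a + b = D1 /\ b + c = D2 /\ c + a = D3) \/ (a + b < D1 /\ b + c < D2 /\ c + a < D3).
Proof.
  intros C. pose proof (corners_rot _ _ _ _ _ _ _ _ _ C) as C2.
  pose proof (corners_rot _ _ _ _ _ _ _ _ _ C2) as C3.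
  pose proof (corners_C3 _ _ _ _ _ _ _ _ _ C).
  pose proof (corners_C3 _ _ _ _ _ _ _ _ _ C2).
  pose proof (corners_C3 _ _ _ _ _ _ _ _ _ C3).
  pose proof (corners_C4 _ _ _ _ _ _ _ _ _ C).
  pose proof (corners_C4 _ _ _ _ _ _ _ _ _ C2).
  pose proof (corners_C4 _ _ _ _ _ _ _ _ _ C3).
  lra.
Qed.

Definition sideinj {X : Type} (G : R -> X) (D : R) : Prop :=
  forall s s', 0 <= s <= D -> 0 <= s' <= D -> G s = G s' -> s = s'.

Lemma transfer {X Y : Type} (G1 G2 G3 : R -> X) (F1 F2 F3 : R -> Y) D1 D2 D3 a b c :
  corners G1 G2 G3 D1 D2 D3 a b c -> corners F1 F2 F3 D1 D2 D3 a b c ->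
  sideinj G1 D1 -> sideinj G2 D2 -> sideinj G3 D3 ->
  forall k j s s', 0 <= s <= sel3 D1 D2 D3 k -> 0 <= s' <= sel3 D1 D2 D3 j ->
  sel3 G1 G2 G3 k s = sel3 G1 G2 G3 j s' -> sel3 F1 F2 F3 k s = sel3 F1 F2 F3 j s'.
Proof.
  intros [_ X1 Y1 Z1] [_ X2 Y2 Z2] I1 I2 I3 k j s s' Hs Hs' E.
  destruct k as [|[|k]]; destruct j as [|[|j]]; simpl in *.
  - f_equal; eauto.
  - apply Y2; auto. apply Y1; auto.
  - symmetry. apply X2; auto. apply X1; auto.
  - symmetry. apply Y2; auto. apply Y1; auto.
  - f_equal; eauto.
  - apply Z2; auto. apply Z1; auto.
  - apply X2; auto. apply X1; auto.
  - symmetry. apply Z2; auto. apply Z1; auto.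
  - f_equal; eauto.
Qed.

Definition N1 (u v : R2 * R3) : R :=
  Rabs (fst (fst u) - fst (fst v)) + Rabs (snd (fst u) - snd (fst v)) +
  Rabs (fst (fst (snd u)) - fst (fst (snd v))) + Rabs (snd (fst (snd u)) - snd (fst (snd v))) +
  Rabs (snd (snd u) - snd (snd v)).

Lemma dist5_eq (u v : R2 * R3) : dist5 u v =
  sqrt ((fst (fst u) - fst (fst v))^2 + (snd (fst u) - snd (fst v))^2 +
  (fst (fst (snd u)) - fst (fst (snd v)))^2 + (snd (fst (snd u)) - snd (fst (snd v)))^2 +
  (snd (snd u) - snd (snd v))^2).
Proof. destruct u as [[? ?] [[? ?] ?]], v as [[? ?] [[? ?] ?]]. reflexivity. Qed.

Lemma dist5_le_N1 u v : dist5 u v <= N1 u v.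
Proof.
  rewrite dist5_eq. unfold N1.
  set (a := fst (fst u) - fst (fst v)). set (b := snd (fst u) - snd (fst v)).
  set (c := fst (fst (snd u)) - fst (fst (snd v))). set (e := snd (fst (snd u)) - snd (fst (snd v))).
  set (f := snd (snd u) - snd (snd v)).
  pose proof (Rabs_pos a). pose proof (Rabs_pos b). pose proof (Rabs_pos c).
  pose proof (Rabs_pos e). pose proof (Rabs_pos f).
  rewrite <- (sqrt_pow2 (Rabs a + Rabs b + Rabs c + Rabs e + Rabs f)) by lra.
  apply sqrt_le_1_alt.
  rewrite <- (pow2_abs a), <- (pow2_abs b), <- (pow2_abs c), <- (pow2_abs e), <- (pow2_abs f).
  nra.
Qed.

Lemma abs_le_sqrt x y : 0 <= y -> Rabs x <= sqrt (x^2 + y).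
Proof.
  intros Hy. rewrite <- (sqrt_pow2 (Rabs x)) by apply Rabs_pos.
  apply sqrt_le_1_alt. rewrite pow2_abs. lra.
Qed.

Lemma N1_le_dist5 u v : N1 u v <= 5 * dist5 u v.
Proof.
  rewrite dist5_eq. unfold N1.
  set (a := fst (fst u) - fst (fst v)). set (b := snd (fst u) - snd (fst v)).
  set (c := fst (fst (snd u)) - fst (fst (snd v))). set (e := snd (fst (snd u)) - snd (fst (snd v))).
  set (f := snd (snd u) - snd (snd v)).
  assert (Ha : Rabs a <= sqrt (a ^ 2 + b ^ 2 + c ^ 2 + e ^ 2 + f ^ 2)).
  { replace (a ^ 2 + b ^ 2 + c ^ 2 + e ^ 2 + f ^ 2) with (a^2 + (b ^ 2 + c ^ 2 + e ^ 2 + f ^ 2)) by ring.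
    apply abs_le_sqrt. nra. }
  assert (Hb : Rabs b <= sqrt (a ^ 2 + b ^ 2 + c ^ 2 + e ^ 2 + f ^ 2)).
  { replace (a ^ 2 + b ^ 2 + c ^ 2 + e ^ 2 + f ^ 2) with (b^2 + (a ^ 2 + c ^ 2 + e ^ 2 + f ^ 2)) by ring.
    apply abs_le_sqrt. nra. }
  assert (Hc : Rabs c <= sqrt (a ^ 2 + b ^ 2 + c ^ 2 + e ^ 2 + f ^ 2)).
  { replace (a ^ 2 + b ^ 2 + c ^ 2 + e ^ 2 + f ^ 2) with (c^2 + (b ^ 2 + a ^ 2 + e ^ 2 + f ^ 2)) by ring.
    apply abs_le_sqrt. nra. }
  assert (He : Rabs e <= sqrt (a ^ 2 + b ^ 2 + c ^ 2 + e ^ 2 + f ^ 2)).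
  { replace (a ^ 2 + b ^ 2 + c ^ 2 + e ^ 2 + f ^ 2) with (e^2 + (b ^ 2 + c ^ 2 + a ^ 2 + f ^ 2)) by ring.
    apply abs_le_sqrt. nra. }
  assert (Hf : Rabs f <= sqrt (a ^ 2 + b ^ 2 + c ^ 2 + e ^ 2 + f ^ 2)).
  { replace (a ^ 2 + b ^ 2 + c ^ 2 + e ^ 2 + f ^ 2) with (f^2 + (b ^ 2 + c ^ 2 + e ^ 2 + a ^ 2)) by ring.
    apply abs_le_sqrt. nra. }
  lra.
Qed.

Lemma N1_tri u v w : N1 u w <= N1 u v + N1 v w.
Proof.
  unfold N1.
  repeat match goal with |- context [Rabs (?x - ?z)] =>
    lazymatch goal with H : Rabs (x - z) <= _ |- _ => fail | _ =>
    let y := match z with fst (fst w) => constr:(fst (fst v)) | snd (fst w) => constr:(snd (fst v))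
      | fst (fst (snd w)) => constr:(fst (fst (snd v))) | snd (fst (snd w)) => constr:(snd (fst (snd v)))
      | snd (snd w) => constr:(snd (snd v)) end in
    assert (Rabs (x - z) <= Rabs (x - y) + Rabs (y - z))
      by (replace (x - z) with ((x - y) + (y - z)) by ring; apply Rabs_triang) end end.
  lra.
Qed.

Lemma N1_sym u v : N1 u v = N1 v u.
Proof.
  unfold N1. rewrite (Rabs_minus_sym (fst (fst u))), (Rabs_minus_sym (snd (fst u))),
    (Rabs_minus_sym (fst (fst (snd u)))), (Rabs_minus_sym (snd (fst (snd u)))),
    (Rabs_minus_sym (snd (snd u))). reflexivity.
Qed.

Lemma N1_pos u v : 0 <= N1 u v.
Proof.
  unfold N1. pose proof (Rabs_pos (fst (fst u) - fst (fst v))).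
  pose proof (Rabs_pos (snd (fst u) - snd (fst v))).
  pose proof (Rabs_pos (fst (fst (snd u)) - fst (fst (snd v)))).
  pose proof (Rabs_pos (snd (fst (snd u)) - snd (fst (snd v)))).
  pose proof (Rabs_pos (snd (snd u) - snd (snd v))). lra.
Qed.

Lemma N1_zero u v : N1 u v = 0 -> u = v.
Proof.
  destruct u as [[a1 a2] [[b1 b2] b3]], v as [[a1' a2'] [[b1' b2'] b3']]. unfold N1; cbn [fst snd].
  intros H.
  pose proof (Rabs_pos (a1 - a1')). pose proof (Rabs_pos (a2 - a2')).
  pose proof (Rabs_pos (b1 - b1')). pose proof (Rabs_pos (b2 - b2')). pose proof (Rabs_pos (b3 - b3')).
  assert (E : forall x y, Rabs (x - y) = 0 -> x = y).
  { intros x y Hx. destruct (Req_dec (x - y) 0). lra. exfalso. apply (Rabs_no_R0 _ H5 Hx). }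
  rewrite (E a1 a1'), (E a2 a2'), (E b1 b1'), (E b2 b2'), (E b3 b3') by lra. reflexivity.
Qed.

Lemma dist5_pos u v : 0 <= dist5 u v.
Proof. rewrite dist5_eq. apply sqrt_pos. Qed.

Lemma dist5_zero u v : dist5 u v = 0 -> u = v.
Proof. intros H. apply N1_zero. pose proof (N1_le_dist5 u v). pose proof (N1_pos u v). lra. Qed.

Lemma tuple_eq (a1 a2 b1 b2 b3 a1' a2' b1' b2' b3' : R) :
  (((a1, a2), ((b1, b2), b3)) : R2 * R3) = ((a1', a2'), ((b1', b2'), b3')) <->
  a1 = a1' /\ a2 = a2' /\ b1 = b1' /\ b2 = b2' /\ b3 = b3'.
Proof.
  split.
  - intros H. injection H. intros. repeat split; auto.
  - intros (-> & -> & -> & -> & ->). reflexivity.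
Qed.

Definition pos (x : R) := Rmax 0 x.
Definition clamp (x : R) := Rmax 0 (Rmin 1 x).

Lemma clamp_lo x : x <= 0 -> clamp x = 0.
Proof. intros. unfold clamp. apply Rmax_left. pose proof (Rmin_r 1 x). lra. Qed.
Lemma clamp_hi x : 1 <= x -> clamp x = 1.
Proof. intros. unfold clamp. rewrite Rmin_left by lra. apply Rmax_right. lra. Qed.
Lemma clamp_id x : 0 <= x <= 1 -> clamp x = x.
Proof. intros. unfold clamp. rewrite Rmin_right by lra. apply Rmax_right. lra. Qed.
Lemma pos_lo x : x <= 0 -> pos x = 0.
Proof. intros. unfold pos. apply Rmax_left. lra. Qed.
Lemma pos_id x : 0 <= x -> pos x = x.
Proof. intros. unfold pos. apply Rmax_right. lra. Qed.

Ltac absdes := unfold pos, clamp, Rmax, Rmin, Rabs;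
  repeat match goal with
  | |- context [Rle_dec ?a ?b] => destruct (Rle_dec a b)
  | |- context [Rcase_abs ?a] => destruct (Rcase_abs a)
  | H : context [Rle_dec ?a ?b] |- _ => destruct (Rle_dec a b) end; lra.

Lemma pos_lip x y : Rabs (pos x - pos y) <= Rabs (x - y).
Proof. absdes. Qed.
Lemma clamp_lip x y : Rabs (clamp x - clamp y) <= Rabs (x - y).
Proof. absdes. Qed.

Lemma pieces st en D w sg s :
  0 <= st -> 0 <= en ->
  ((sg = 0 /\ w = 0 /\ st + en = D) \/ (sg = 1 /\ st + en < D /\ (D - st - en) * w = 1)) ->
  0 <= s <= D ->
  (s <= st /\ clamp ((s - st) * w) = 0 /\ (D - st - en) * clamp ((s - st) * w) = 0 /\
     pos (st - s) = st - s /\ pos (s - (D - en)) = 0) \/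
  (st < s < D - en /\ sg = 1 /\ 0 < clamp ((s - st) * w) < 1 /\
     (D - st - en) * clamp ((s - st) * w) = s - st /\ pos (st - s) = 0 /\ pos (s - (D - en)) = 0) \/
  (D - en <= s /\ clamp ((s - st) * w) = sg /\ (D - st - en) * clamp ((s - st) * w) = D - st - en /\
     pos (st - s) = 0 /\ pos (s - (D - en)) = s - (D - en)).
Proof.
  intros Hst Hen [(Hsg & Hw & HD)|(Hsg & HD & Hw)] Hs.
  - subst w. rewrite Rmult_0_r, (clamp_lo 0) by lra.
    destruct (Rle_lt_dec s st).
    + left. rewrite pos_id, pos_lo by lra. repeat split; lra.
    + right; right. rewrite pos_lo, pos_id by lra. repeat split; lra.
  - assert (Hw0 : 0 < w) by nra.
    destruct (Rle_lt_dec s st).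
    + left. rewrite clamp_lo by nra. rewrite pos_id, pos_lo by lra. repeat split; lra.
    + destruct (Rlt_le_dec s (D - en)).
      * right; left. rewrite clamp_id by nra. rewrite !pos_lo by lra.
        assert ((D - st - en) * ((s - st) * w) = s - st).
        { replace ((D - st - en) * ((s - st) * w)) with ((s - st) * ((D - st - en) * w)) by ring.
          rewrite Hw. ring. }
        repeat split; try lra; try nra.
      * right; right. rewrite clamp_hi by nra. rewrite pos_lo, pos_id by lra. repeat split; lra.
Qed.

Definition Phi1 al be D1 w1 (s : R) : R2 * R3 :=
  ((clamp ((s - al) * w1), 0), ((pos (al - s), pos (s - (D1 - be))), 0)).
Definition Phi2 be ga D2 w2 sg (s : R) : R2 * R3 :=
  ((sg - clamp ((s - be) * w2), clamp ((s - be) * w2)), ((0, pos (be - s)), pos (s - (D2 - ga)))).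
Definition Phi3 ga al D3 w3 sg (s : R) : R2 * R3 :=
  ((0, sg - clamp ((s - ga) * w3)), ((pos (s - (D3 - al)), 0), pos (ga - s))).

Definition MC (al be ga D1 D2 D3 sg w1 w2 w3 : R) : Prop :=
  0 <= al /\ 0 <= be /\ 0 <= ga /\
  ((sg = 0 /\ w1 = 0 /\ w2 = 0 /\ w3 = 0 /\ al + be = D1 /\ be + ga = D2 /\ ga + al = D3) \/
   (sg = 1 /\ al + be < D1 /\ be + ga < D2 /\ ga + al < D3 /\
    (D1 - al - be) * w1 = 1 /\ (D2 - be - ga) * w2 = 1 /\ (D3 - ga - al) * w3 = 1)).

Lemma MC1 al be ga D1 D2 D3 sg w1 w2 w3 : MC al be ga D1 D2 D3 sg w1 w2 w3 ->
  (sg = 0 /\ w1 = 0 /\ al + be = D1) \/ (sg = 1 /\ al + be < D1 /\ (D1 - al - be) * w1 = 1).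
Proof. intros (_&_&_&[H|H]); [left|right]; tauto. Qed.
Lemma MC2 al be ga D1 D2 D3 sg w1 w2 w3 : MC al be ga D1 D2 D3 sg w1 w2 w3 ->
  (sg = 0 /\ w2 = 0 /\ be + ga = D2) \/ (sg = 1 /\ be + ga < D2 /\ (D2 - be - ga) * w2 = 1).
Proof. intros (_&_&_&[H|H]); [left|right]; tauto. Qed.
Lemma MC3 al be ga D1 D2 D3 sg w1 w2 w3 : MC al be ga D1 D2 D3 sg w1 w2 w3 ->
  (sg = 0 /\ w3 = 0 /\ ga + al = D3) \/ (sg = 1 /\ ga + al < D3 /\ (D3 - ga - al) * w3 = 1).
Proof. intros (_&_&_&[H|H]); [left|right]; tauto. Qed.

Lemma MCdis al be ga D1 D2 D3 sg w1 w2 w3 : MC al be ga D1 D2 D3 sg w1 w2 w3 ->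
  (sg = 0 /\ al + be = D1 /\ be + ga = D2 /\ ga + al = D3) \/
  (sg = 1 /\ al + be < D1 /\ be + ga < D2 /\ ga + al < D3).
Proof. intros (_&_&_&[H|H]); [left|right]; tauto. Qed.

Ltac getpieces H s := 
  let P1 := fresh "PA" in let P2 := fresh "PB" in let P3 := fresh "PC" in
  pose proof (MC1 _ _ _ _ _ _ _ _ _ _ H) as P1;
  pose proof (MC2 _ _ _ _ _ _ _ _ _ _ H) as P2;
  pose proof (MC3 _ _ _ _ _ _ _ _ _ _ H) as P3.

Ltac peq := repeat (apply injective_projections; cbn [fst snd]).

Lemma model_corners al be ga D1 D2 D3 sg w1 w2 w3 :
  MC al be ga D1 D2 D3 sg w1 w2 w3 ->
  corners (Phi1 al be D1 w1) (Phi2 be ga D2 w2 sg) (Phi3 ga al D3 w3 sg) D1 D2 D3 al be ga.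
Proof.
  intros H. pose proof (MCdis _ _ _ _ _ _ _ _ _ _ H) as Hd.
  pose proof H as (H0a & H0b & H0c & _).
  pose proof (MC1 _ _ _ _ _ _ _ _ _ _ H) as M1.
  pose proof (MC2 _ _ _ _ _ _ _ _ _ _ H) as M2.
  pose proof (MC3 _ _ _ _ _ _ _ _ _ _ H) as M3.
  split.
  - lra.
  - intros s s' Hs Hs'.
    pose proof (pieces ga al D3 w3 sg s H0c H0a M3 Hs) as P.
    pose proof (pieces al be D1 w1 sg s' H0a H0b M1 Hs') as Q.
    unfold Phi1, Phi3. rewrite tuple_eq. split; intros; repeat split; lra.
  - intros s s' Hs Hs'.
    pose proof (pieces al be D1 w1 sg s H0a H0b M1 Hs) as P.
    pose proof (pieces be ga D2 w2 sg s' H0b H0c M2 Hs') as Q.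
    unfold Phi1, Phi2. rewrite tuple_eq. split; intros; repeat split; lra.
  - intros s s' Hs Hs'.
    pose proof (pieces be ga D2 w2 sg s H0b H0c M2 Hs) as P.
    pose proof (pieces ga al D3 w3 sg s' H0c H0a M3 Hs') as Q.
    unfold Phi2, Phi3. rewrite tuple_eq. split; intros; repeat split; lra.
Qed.

Definition pi1 al L1 (u : R2 * R3) : R :=
  al - fst (fst (snd u)) + L1 * fst (fst u) + snd (fst (snd u)).
Definition pi2 be L2 (u : R2 * R3) : R :=
  be - snd (fst (snd u)) + L2 * snd (fst u) + snd (snd u).
Definition pi3 ga L3 sg (u : R2 * R3) : R :=
  ga - snd (snd u) + L3 * (sg - snd (fst u)) + fst (fst (snd u)).

Lemma pi1_Phi1 al be ga D1 D2 D3 sg w1 w2 w3 s :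
  MC al be ga D1 D2 D3 sg w1 w2 w3 -> 0 <= s <= D1 ->
  pi1 al (D1 - al - be) (Phi1 al be D1 w1 s) = s.
Proof.
  intros H Hs. pose proof H as (H0a & H0b & H0c & _).
  pose proof (MC1 _ _ _ _ _ _ _ _ _ _ H) as M1.
  pose proof (pieces al be D1 w1 sg s H0a H0b M1 Hs) as P.
  unfold pi1, Phi1; cbn [fst snd]. lra.
Qed.

Lemma pi2_Phi2 al be ga D1 D2 D3 sg w1 w2 w3 s :
  MC al be ga D1 D2 D3 sg w1 w2 w3 -> 0 <= s <= D2 ->
  pi2 be (D2 - be - ga) (Phi2 be ga D2 w2 sg s) = s.
Proof.
  intros H Hs. pose proof H as (H0a & H0b & H0c & _).
  pose proof (MC2 _ _ _ _ _ _ _ _ _ _ H) as M.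
  pose proof (pieces be ga D2 w2 sg s H0b H0c M Hs) as P.
  unfold pi2, Phi2; cbn [fst snd]. lra.
Qed.

Lemma pi3_Phi3 al be ga D1 D2 D3 sg w1 w2 w3 s :
  MC al be ga D1 D2 D3 sg w1 w2 w3 -> 0 <= s <= D3 ->
  pi3 ga (D3 - ga - al) sg (Phi3 ga al D3 w3 sg s) = s.
Proof.
  intros H Hs. pose proof H as (H0a & H0b & H0c & _).
  pose proof (MC3 _ _ _ _ _ _ _ _ _ _ H) as M.
  pose proof (pieces ga al D3 w3 sg s H0c H0a M Hs) as P.
  unfold pi3, Phi3; cbn [fst snd]. lra.
Qed.

Lemma lin_bound L A B C : 0 <= L -> Rabs (- A + L * B + C) <= Rabs A + L * Rabs B + Rabs C.
Proof.
  intros HL. eapply Rle_trans; [apply Rabs_triang|].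
  eapply Rle_trans; [apply Rplus_le_compat_r, Rabs_triang|].
  rewrite Rabs_Ropp, Rabs_mult, (Rabs_right L) by lra. lra.
Qed.

Lemma lin_bound2 L A B C N : 0 <= L -> Rabs A <= N -> Rabs B <= N -> Rabs C <= N ->
  Rabs (- A + L * B + C) <= (2 + L) * N.
Proof.
  intros HL HA HB HC. eapply Rle_trans; [apply lin_bound; auto|].
  pose proof (Rabs_pos B). nra.
Qed.

Ltac n1b := unfold N1;
  repeat match goal with |- context [Rabs ?x] =>
    lazymatch goal with H : 0 <= Rabs x |- _ => fail | _ => pose proof (Rabs_pos x) end end; lra.

Lemma pi1_lip al L u v : 0 <= L -> Rabs (pi1 al L u - pi1 al L v) <= (2 + L) * N1 u v.
Proof.
  intros HL. unfold pi1.
  replace (al - fst (fst (snd u)) + L * fst (fst u) + snd (fst (snd u)) -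
     (al - fst (fst (snd v)) + L * fst (fst v) + snd (fst (snd v)))) with
    (- (fst (fst (snd u)) - fst (fst (snd v))) + L * (fst (fst u) - fst (fst v)) +
       (snd (fst (snd u)) - snd (fst (snd v)))) by ring.
  apply lin_bound2; auto; n1b.
Qed.

Lemma pi2_lip be L u v : 0 <= L -> Rabs (pi2 be L u - pi2 be L v) <= (2 + L) * N1 u v.
Proof.
  intros HL. unfold pi2.
  replace (be - snd (fst (snd u)) + L * snd (fst u) + snd (snd u) -
    (be - snd (fst (snd v)) + L * snd (fst v) + snd (snd v))) with
    (- (snd (fst (snd u)) - snd (fst (snd v))) + L * (snd (fst u) - snd (fst v)) +
       (snd (snd u) - snd (snd v))) by ring.
  apply lin_bound2; auto; n1b.
Qed.

Lemma pi3_lip ga L sg u v : 0 <= L -> Rabs (pi3 ga L sg u - pi3 ga L sg v) <= (2 + L) * N1 u v.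
Proof.
  intros HL. unfold pi3.
  replace (ga - snd (snd u) + L * (sg - snd (fst u)) + fst (fst (snd u)) -
    (ga - snd (snd v) + L * (sg - snd (fst v)) + fst (fst (snd v)))) with
    (- (snd (snd u) - snd (snd v)) + L * (snd (fst v) - snd (fst u)) +
       (fst (fst (snd u)) - fst (fst (snd v)))) by ring.
  apply lin_bound2; auto; [n1b| |n1b].
  rewrite Rabs_minus_sym. n1b.
Qed.

Lemma scale_abs w s s' st : 0 <= w -> Rabs ((s - st) * w - (s' - st) * w) = w * Rabs (s - s').
Proof.
  intros Hw. replace ((s - st) * w - (s' - st) * w) with ((s - s') * w) by ring.
  rewrite Rabs_mult, (Rabs_right w) by lra. ring.
Qed.

Lemma Phi1_lip al be D1 w1 s s' : 0 <= w1 ->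
  N1 (Phi1 al be D1 w1 s) (Phi1 al be D1 w1 s') <= (2 + w1) * Rabs (s - s').
Proof.
  intros Hw. unfold N1, Phi1; cbn [fst snd].
  pose proof (clamp_lip ((s - al) * w1) ((s' - al) * w1)). rewrite scale_abs in H by auto.
  pose proof (pos_lip (al - s) (al - s')). replace (al - s - (al - s')) with (- (s - s')) in H0 by ring.
  rewrite Rabs_Ropp in H0.
  pose proof (pos_lip (s - (D1 - be)) (s' - (D1 - be))).
  replace (s - (D1 - be) - (s' - (D1 - be))) with (s - s') in H1 by ring.
  replace (0 - 0) with 0 by ring. rewrite Rabs_R0. lra.
Qed.

Lemma Phi2_lip be ga D2 w2 sg s s' : 0 <= w2 ->
  N1 (Phi2 be ga D2 w2 sg s) (Phi2 be ga D2 w2 sg s') <= (2 + 2 * w2) * Rabs (s - s').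
Proof.
  intros Hw. unfold N1, Phi2; cbn [fst snd].
  pose proof (clamp_lip ((s - be) * w2) ((s' - be) * w2)). rewrite scale_abs in H by auto.
  pose proof (pos_lip (be - s) (be - s')). replace (be - s - (be - s')) with (- (s - s')) in H0 by ring.
  rewrite Rabs_Ropp in H0.
  pose proof (pos_lip (s - (D2 - ga)) (s' - (D2 - ga))).
  replace (s - (D2 - ga) - (s' - (D2 - ga))) with (s - s') in H1 by ring.
  replace (0 - 0) with 0 by ring. rewrite Rabs_R0.
  replace (sg - clamp ((s - be) * w2) - (sg - clamp ((s' - be) * w2))) with
    (- (clamp ((s - be) * w2) - clamp ((s' - be) * w2))) by ring. rewrite Rabs_Ropp. lra.
Qed.

Lemma Phi3_lip ga al D3 w3 sg s s' : 0 <= w3 ->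
  N1 (Phi3 ga al D3 w3 sg s) (Phi3 ga al D3 w3 sg s') <= (2 + w3) * Rabs (s - s').
Proof.
  intros Hw. unfold N1, Phi3; cbn [fst snd].
  pose proof (clamp_lip ((s - ga) * w3) ((s' - ga) * w3)). rewrite scale_abs in H by auto.
  pose proof (pos_lip (ga - s) (ga - s')). replace (ga - s - (ga - s')) with (- (s - s')) in H0 by ring.
  rewrite Rabs_Ropp in H0.
  pose proof (pos_lip (s - (D3 - al)) (s' - (D3 - al))).
  replace (s - (D3 - al) - (s' - (D3 - al))) with (s - s') in H1 by ring.
  replace (0 - 0) with 0 by ring. rewrite Rabs_R0.
  replace (sg - clamp ((s - ga) * w3) - (sg - clamp ((s' - ga) * w3))) with
    (- (clamp ((s - ga) * w3) - clamp ((s' - ga) * w3))) by ring. rewrite Rabs_Ropp. lra.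
Qed.

Lemma Phi_mem al be ga D1 D2 D3 sg w1 w2 w3 k s :
  MC al be ga D1 D2 D3 sg w1 w2 w3 -> 0 <= s <= sel3 D1 D2 D3 k ->
  spiky_triangle (0,0) (sg,0) (0,sg) al be ga
    (sel3 (Phi1 al be D1 w1) (Phi2 be ga D2 w2 sg) (Phi3 ga al D3 w3 sg) k s).
Proof.
  intros H Hs. pose proof H as (H0a & H0b & H0c & _).
  pose proof (MC1 _ _ _ _ _ _ _ _ _ _ H) as M1.
  pose proof (MC2 _ _ _ _ _ _ _ _ _ _ H) as M2.
  pose proof (MC3 _ _ _ _ _ _ _ _ _ _ H) as M3.
  unfold spiky_triangle.
  destruct k as [|[|k]]; simpl in Hs |- *.
  - destruct (pieces al be D1 w1 sg s H0a H0b M1 Hs) as [P|[P|P]].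
    + right; left. exists (al - s). split; [lra|]. unfold Phi1; peq; lra.
    + destruct P as (P1 & -> & P3 & P4 & P5 & P6).
      left. split.
      * left. exists (clamp ((s - al) * w1)). split; [lra|]. unfold Phi1, interp2; peq; lra.
      * unfold Phi1; peq; lra.
    + right; right; left. exists (s - (D1 - be)). split; [lra|]. unfold Phi1; peq; lra.
  - destruct (pieces be ga D2 w2 sg s H0b H0c M2 Hs) as [P|[P|P]].
    + right; right; left. exists (be - s). split; [lra|]. unfold Phi2; peq; lra.
    + destruct P as (P1 & -> & P3 & P4 & P5 & P6).
      left. split.
      * right; left. exists (clamp ((s - be) * w2)). split; [lra|]. unfold Phi2, interp2; peq; lra.
      * unfold Phi2; peq; lra.
    + right; right; right. exists (s - (D2 - ga)). split; [lra|]. unfold Phi2; peq; lra.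
  - destruct (pieces ga al D3 w3 sg s H0c H0a M3 Hs) as [P|[P|P]].
    + right; right; right. exists (ga - s). split; [lra|]. unfold Phi3; peq; lra.
    + destruct P as (P1 & -> & P3 & P4 & P5 & P6).
      left. split.
      * right; right. exists (clamp ((s - ga) * w3)). split; [lra|]. unfold Phi3, interp2; peq; lra.
      * unfold Phi3; peq; lra.
    + right; left. exists (s - (D3 - al)). split; [lra|]. unfold Phi3; peq; lra.
Qed.

Lemma clamp_val st en D w sg th :
  ((sg = 0 /\ w = 0 /\ st + en = D) \/ (sg = 1 /\ st + en < D /\ (D - st - en) * w = 1)) ->
  0 <= th <= 1 -> clamp ((st + th * (D - st - en) - st) * w) = th * sg.
Proof.
  intros [(-> & -> & _)|(-> & _ & Hw)] Hth.
  - rewrite Rmult_0_r, clamp_lo; lra.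
  - replace ((st + th * (D - st - en) - st) * w) with (th * ((D - st - en) * w)) by ring.
    rewrite Hw, !Rmult_1_r. apply clamp_id; lra.
Qed.

Lemma Phi_cover al be ga D1 D2 D3 sg w1 w2 w3 u :
  MC al be ga D1 D2 D3 sg w1 w2 w3 ->
  spiky_triangle (0,0) (sg,0) (0,sg) al be ga u ->
  exists k s, 0 <= s <= sel3 D1 D2 D3 k /\
    u = sel3 (Phi1 al be D1 w1) (Phi2 be ga D2 w2 sg) (Phi3 ga al D3 w3 sg) k s.
Proof.
  intros H Hu. pose proof H as (H0a & H0b & H0c & _).
  pose proof (MC1 _ _ _ _ _ _ _ _ _ _ H) as M1.
  pose proof (MC2 _ _ _ _ _ _ _ _ _ _ H) as M2.
  pose proof (MC3 _ _ _ _ _ _ _ _ _ _ H) as M3.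
  pose proof (MCdis _ _ _ _ _ _ _ _ _ _ H) as Md.
  destruct u as [[p1 p2] [[q1 q2] q3]].
  destruct Hu as [[[S|[S|S]] Z]|[(t & Ht & E)|[(t & Ht & E)|(t & Ht & E)]]];
    cbn [fst snd] in *.
  - destruct S as (th & Hth & E). unfold interp2 in E; cbn [fst snd] in E.
    injection E; injection Z; intros; subst.
    set (L := D1 - al - be).
    assert (0 <= th * L <= L) by (unfold L; nra).
    exists O, (al + th * L). simpl. split; [unfold L in *; lra|].
    unfold Phi1. unfold L. rewrite (clamp_val al be D1 w1 sg th M1 Hth).
    fold L. rewrite (pos_lo (al - (al + th * L))) by lra.
    rewrite (pos_lo (al + th * L - (D1 - be))) by (unfold L in *; lra).
    peq; lra.
  - destruct S as (th & Hth & E). unfold interp2 in E; cbn [fst snd] in E.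
    injection E; injection Z; intros; subst.
    set (L := D2 - be - ga).
    assert (0 <= th * L <= L) by (unfold L; nra).
    exists 1%nat, (be + th * L). simpl. split; [unfold L in *; lra|].
    unfold Phi2. unfold L. rewrite (clamp_val be ga D2 w2 sg th M2 Hth).
    fold L. rewrite (pos_lo (be - (be + th * L))) by lra.
    rewrite (pos_lo (be + th * L - (D2 - ga))) by (unfold L in *; lra).
    peq; lra.
  - destruct S as (th & Hth & E). unfold interp2 in E; cbn [fst snd] in E.
    injection E; injection Z; intros; subst.
    set (L := D3 - ga - al).
    assert (0 <= th * L <= L) by (unfold L; nra).
    exists 2%nat, (ga + th * L). simpl. split; [unfold L in *; lra|].
    unfold Phi3. unfold L. rewrite (clamp_val ga al D3 w3 sg th M3 Hth).
    fold L. rewrite (pos_lo (ga - (ga + th * L))) by lra.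
    rewrite (pos_lo (ga + th * L - (D3 - al))) by (unfold L in *; lra).
    peq; lra.
  - injection E; intros; subst.
    exists O, (al - t). simpl. split; [lra|].
    destruct (pieces al be D1 w1 sg (al - t) H0a H0b M1 ltac:(lra)) as [P|[P|P]];
      unfold Phi1; peq; lra.
  - injection E; intros; subst.
    exists 1%nat, (be - t). simpl. split; [lra|].
    destruct (pieces be ga D2 w2 sg (be - t) H0b H0c M2 ltac:(lra)) as [P|[P|P]];
      unfold Phi2; peq; lra.
  - injection E; intros; subst.
    exists 2%nat, (ga - t). simpl. split; [lra|].
    destruct (pieces ga al D3 w3 sg (ga - t) H0c H0a M3 ltac:(lra)) as [P|[P|P]];
      unfold Phi3; peq; lra.
Qed.

Lemma sep_min (psi : R -> R) D K : 0 <= D -> 0 <= K ->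
  (forall t t', 0 <= t <= D -> 0 <= t' <= D -> Rabs (psi t - psi t') <= K * Rabs (t - t')) ->
  (forall t, 0 <= t <= D -> 0 < psi t) ->
  exists del, 0 < del /\ forall t, 0 <= t <= D -> del <= psi t.
Proof.
  intros HD HK Hl Hp.
  set (cl := fun t => Rmax 0 (Rmin D t)).
  assert (Hcl : forall t, 0 <= cl t <= D).
  { intros t. unfold cl, Rmax, Rmin. destruct (Rle_dec D t); destruct (Rle_dec 0 _); lra. }
  assert (Hcl2 : forall t t', Rabs (cl t - cl t') <= Rabs (t - t')).
  { intros t t'. unfold cl, Rmax, Rmin, Rabs.
    repeat match goal with
    | |- context [Rle_dec ?a ?b] => destruct (Rle_dec a b)
    | |- context [Rcase_abs ?a] => destruct (Rcase_abs a)
    | H : context [Rle_dec ?a ?b] |- _ => destruct (Rle_dec a b) end; lra. }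
  assert (Hid : forall t, 0 <= t <= D -> cl t = t).
  { intros t Ht. unfold cl. rewrite Rmin_right by lra. apply Rmax_right. lra. }
  set (phi := fun t => psi (cl t)).
  assert (Hc : forall c, 0 <= c <= D -> continuity_pt phi c).
  { intros c _. unfold continuity_pt, continue_in, limit1_in, limit_in. simpl. unfold R_dist.
    intros eps He. exists (eps / (K + 1)). split.
    - apply Rdiv_lt_0_compat; lra.
    - intros x [_ Hx]. unfold phi.
      eapply Rle_lt_trans; [apply Hl; apply Hcl|].
      eapply Rle_lt_trans; [apply Rmult_le_compat_l; [lra|apply Hcl2]|].
      assert (K * Rabs (x - c) <= K * (eps / (K + 1))) by (apply Rmult_le_compat_l; lra).
      assert (K * (eps / (K + 1)) < eps).
      { apply (Rmult_lt_reg_r (K + 1)); [lra|].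
        replace (K * (eps / (K + 1)) * (K + 1)) with (K * eps) by (field; lra). nra. }
      lra. }
  destruct (continuity_ab_min phi 0 D HD Hc) as (mx & Hmin & Hmx).
  exists (phi mx). split.
  - unfold phi. apply Hp, Hcl.
  - intros t Ht. specialize (Hmin t Ht). unfold phi in *. rewrite (Hid t Ht) in Hmin. rewrite (Hid mx Hmx) in *. auto.
Qed.

Lemma paste {A B : Type} (dA : A -> A -> R) (dB : B -> B -> R) (h : A -> B)
  (G1 G2 G3 : R -> A) (F1 F2 F3 : R -> B) (D1 D2 D3 K : R) :
  0 <= K -> (forall x y, 0 <= dA x y) ->
  (forall k s, 0 <= s <= sel3 D1 D2 D3 k -> h (sel3 G1 G2 G3 k s) = sel3 F1 F2 F3 k s) ->
  (forall k s s', 0 <= s <= sel3 D1 D2 D3 k -> 0 <= s' <= sel3 D1 D2 D3 k ->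
     dB (sel3 F1 F2 F3 k s) (sel3 F1 F2 F3 k s') <= K * dA (sel3 G1 G2 G3 k s) (sel3 G1 G2 G3 k s')) ->
  (forall k a, (exists s0, 0 <= s0 <= sel3 D1 D2 D3 k /\ a = sel3 G1 G2 G3 k s0) \/
     (exists del, 0 < del /\ forall s, 0 <= s <= sel3 D1 D2 D3 k -> del <= dA a (sel3 G1 G2 G3 k s))) ->
  cont_on dA dB h (fun a => exists k s, 0 <= s <= sel3 D1 D2 D3 k /\ a = sel3 G1 G2 G3 k s).
Proof.
  intros HK HdA Hh HL Hs a _ e He.
  assert (Q : forall j, exists del, 0 < del /\ forall s, 0 <= s <= sel3 D1 D2 D3 j ->
    dA a (sel3 G1 G2 G3 j s) < del -> dB (h a) (h (sel3 G1 G2 G3 j s)) < e).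
  { intros j. destruct (Hs j a) as [(s1 & Hs1 & ->)|(del & Hd & Hdel)].
    - exists (e / (K + 1)). split; [apply Rdiv_lt_0_compat; lra|].
      intros s Hs0 Hlt. rewrite !Hh by auto.
      eapply Rle_lt_trans; [apply HL; auto|].
      assert (K * dA (sel3 G1 G2 G3 j s1) (sel3 G1 G2 G3 j s) <= K * (e / (K + 1))).
      { apply Rmult_le_compat_l; lra. }
      assert (K * (e / (K + 1)) < e).
      { apply (Rmult_lt_reg_r (K + 1)); [lra|].
        replace (K * (e / (K + 1)) * (K + 1)) with (K * e) by (field; lra). nra. }
      lra.
    - exists del. split; auto. intros s Hs0 Hlt. specialize (Hdel s Hs0). lra. }
  destruct (Q O) as (d0 & H0 & Q0). destruct (Q 1%nat) as (d1 & H1 & Q1).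
  destruct (Q 2%nat) as (d2 & H2 & Q2).
  exists (Rmin d0 (Rmin d1 d2)). split.
  - apply Rmin_glb_lt; auto. apply Rmin_glb_lt; auto.
  - intros a' (j & s & Hv & ->) Hlt.
    pose proof (Rmin_l d0 (Rmin d1 d2)). pose proof (Rmin_r d0 (Rmin d1 d2)).
    pose proof (Rmin_l d1 d2). pose proof (Rmin_r d1 d2).
    destruct j as [|[|j]].
    + apply Q0; auto; lra.
    + apply Q1; auto; lra.
    + apply Q2; auto; simpl in *; lra.
Qed.

Definition chmap {A B : Type} (D1 D2 D3 : R) (G1 G2 G3 : R -> A) (F1 F2 F3 : R -> B) (a : A) : B :=
  let ks := epsilon (inhabits (0%nat, 0))
    (fun ks => 0 <= snd ks <= sel3 D1 D2 D3 (fst ks) /\ a = sel3 G1 G2 G3 (fst ks) (snd ks)) in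
  sel3 F1 F2 F3 (fst ks) (snd ks).

Lemma chmap_spec {A B : Type} D1 D2 D3 (G1 G2 G3 : R -> A) (F1 F2 F3 : R -> B) :
  (forall k j s s', 0 <= s <= sel3 D1 D2 D3 k -> 0 <= s' <= sel3 D1 D2 D3 j ->
    sel3 G1 G2 G3 k s = sel3 G1 G2 G3 j s' -> sel3 F1 F2 F3 k s = sel3 F1 F2 F3 j s') ->
  forall k s, 0 <= s <= sel3 D1 D2 D3 k ->
  chmap D1 D2 D3 G1 G2 G3 F1 F2 F3 (sel3 G1 G2 G3 k s) = sel3 F1 F2 F3 k s.
Proof.
  intros T k s Hs. unfold chmap.
  pose proof (epsilon_spec (inhabits (0%nat, 0))
    (fun ks => 0 <= snd ks <= sel3 D1 D2 D3 (fst ks) /\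
       sel3 G1 G2 G3 k s = sel3 G1 G2 G3 (fst ks) (snd ks))) as E.
  destruct E as [E1 E2]. { exists (k, s). simpl. auto. }
  symmetry. apply T; auto.
Qed.

Lemma cont_on_sub {A B : Type} dA dB (h : A -> B) (S T : A -> Prop) :
  cont_on dA dB h S -> (forall a, T a -> S a) -> cont_on dA dB h T.
Proof.
  intros C HT a Ha e He. destruct (C a (HT a Ha) e He) as (del & Hd & H).
  exists del. split; auto.
Qed.

Lemma seg_arc {X : Type} (d : X -> X -> R) a b g p :
  CAT0 d -> geodesic d a b g ->
  (geod_seg d a b p <-> exists s, 0 <= s <= d a b /\ p = arc g (d a b) s).
Proof.
  intros Hc Hg. assert (Hm : is_metric d) by apply Hc.
  pose proof Hm as (Hpos & Hxx & Hsep & Hsym & Htri). split.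
  - intros (g' & th & Hg' & Hth & ->).
    rewrite <- (geod_unique d a b g g' th Hc Hg Hg' Hth).
    exists (th * d a b). split; [pose proof (Hpos a b); nra|].
    destruct (Req_dec (d a b) 0) as [Z|Z].
    + rewrite Z, Rmult_0_r. unfold arc. replace (0/0) with 0 by (unfold Rdiv; ring).
      apply Hsep. destruct Hg as (_ & _ & Hgd). rewrite Hgd by lra. rewrite Z. ring.
    + unfold arc. f_equal. field. auto.
  - intros (s & Hs & ->). exists g, (s / d a b). split; auto. split; auto.
    destruct (Req_dec (d a b) 0) as [Z|Z].
    + rewrite Z. unfold Rdiv. rewrite Rinv_0, Rmult_0_r. lra.
    + apply div_range; auto.
Qed.

Lemma arc_inj {X : Type} (d : X -> X -> R) x y g :
  is_metric d -> geodesic d x y g -> sideinj (arc g (d x y)) (d x y).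
Proof.
  intros Hm Hg s s' Hs Hs' E. pose proof (arc_iso d x y g s s' Hm Hg Hs Hs') as I.
  rewrite E, (proj1 (proj2 Hm)) in I.
  destruct (Req_dec (s - s') 0). lra. exfalso. apply (Rabs_no_R0 _ H). auto.
Qed.

Lemma MC_w al be ga D1 D2 D3 sg w1 w2 w3 : MC al be ga D1 D2 D3 sg w1 w2 w3 ->
  0 <= w1 /\ 0 <= w2 /\ 0 <= w3 /\ 0 <= D1 - al - be /\ 0 <= D2 - be - ga /\ 0 <= D3 - ga - al.
Proof. intros (_ & _ & _ & [H|H]); [lra|]. destruct H as (_ & A & B & C & E & F & G). repeat split; nra. Qed.

Lemma N1_lip1 u v v' : Rabs (N1 u v - N1 u v') <= N1 v v'.
Proof.
  pose proof (N1_tri u v' v). pose proof (N1_tri u v v'). rewrite (N1_sym v' v) in H.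
  apply Rabs_le. lra.
Qed.

Lemma d_lip1 {X : Type} (d : X -> X -> R) a u v : is_metric d -> Rabs (d a u - d a v) <= d u v.
Proof.
  intros (Hpos & Hxx & Hsep & Hsym & Htri).
  pose proof (Htri a v u). pose proof (Htri a u v). rewrite (Hsym v u) in H.
  apply Rabs_le. lra.
Qed.

Theorem lemma4p4 (X I : Type) (d : X -> X -> R)
  (P : I -> R2 -> Prop) (phi : I -> R2 -> X) :
  polygonal_complex d P phi -> CAT0 d ->
  forall x y z : X, homeomorphic_to_spiky_triangle d (geod_triangle d x y z).
Proof.
  intros _ Hc x y z.
  assert (Hm : is_metric d) by apply Hc.
  pose proof Hm as (Hpos & Hxx & Hsep & Hsym & Htri).
  destruct (proj2 (proj1 Hc) x y) as [g1 G1].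
  destruct (proj2 (proj1 Hc) y z) as [g2 G2].
  destruct (proj2 (proj1 Hc) z x) as [g3 G3].
  pose proof (rev_geod d x y g1 Hm G1) as R1.
  pose proof (rev_geod d y z g2 Hm G2) as R2.
  pose proof (rev_geod d z x g3 Hm G3) as R3.
  destruct (corner d x y z g1 _ Hc G1 R3) as [Bx Cx].
  destruct (corner d y z x g2 _ Hc G2 R1) as [By Cy].
  destruct (corner d z x y g3 _ Hc G3 R2) as [Bz Cz].
  set (al := spike g1 (fun t => g3 (1 - t)) (d x y) (d x z)) in *.
  set (be := spike g2 (fun t => g1 (1 - t)) (d y z) (d y x)) in *.
  set (ga := spike g3 (fun t => g2 (1 - t)) (d z x) (d z y)) in *.
  rewrite (Hsym x z) in Bx, Cx. rewrite (Hsym y x) in By, Cy. rewrite (Hsym z y) in Bz, Cz.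
  set (Γ1 := arc g1 (d x y)). set (Γ2 := arc g2 (d y z)). set (Γ3 := arc g3 (d z x)).
  assert (CG : corners Γ1 Γ2 Γ3 (d x y) (d y z) (d z x) al be ga).
  { split.
    - lra.
    - intros s s' Hs Hs'. unfold Γ1, Γ3. rewrite (arc_rev d z x g3 s Hm G3 Hs).
      destruct (Cx s' (d z x - s) Hs' ltac:(lra)) as [C1 C2].
      split; intros E; [symmetry in E; apply C1 in E; lra|symmetry; apply C2; lra].
    - intros s s' Hs Hs'. unfold Γ1, Γ2. rewrite (arc_rev d x y g1 s Hm G1 Hs).
      destruct (Cy s' (d x y - s) Hs' ltac:(lra)) as [C1 C2].
      split; intros E; [symmetry in E; apply C1 in E; lra|symmetry; apply C2; lra].
    - intros s s' Hs Hs'. unfold Γ2, Γ3. rewrite (arc_rev d y z g2 s Hm G2 Hs).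
      destruct (Cz s' (d y z - s) Hs' ltac:(lra)) as [C1 C2].
      split; intros E; [symmetry in E; apply C1 in E; lra|symmetry; apply C2; lra]. }
  assert (HMC : exists sg w1 w2 w3, MC al be ga (d x y) (d y z) (d z x) sg w1 w2 w3).
  { destruct (corners_class _ _ _ _ _ _ _ _ _ CG) as [Tri|Non].
    - exists 0, 0, 0, 0. unfold MC. repeat split; try lra; left; lra.
    - exists 1, (/ (d x y - al - be)), (/ (d y z - be - ga)), (/ (d z x - ga - al)).
      unfold MC. repeat split; try lra. right.
      repeat split; try lra; try (apply Rinv_r; lra). }
  destruct HMC as (sg & w1 & w2 & w3 & HMC).
  destruct (MC_w _ _ _ _ _ _ _ _ _ _ HMC) as (Hw1 & Hw2 & Hw3 & HL1 & HL2 & HL3).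
  set (F1 := Phi1 al be (d x y) w1). set (F2 := Phi2 be ga (d y z) w2 sg).
  set (F3 := Phi3 ga al (d z x) w3 sg).
  pose proof (model_corners _ _ _ _ _ _ _ _ _ _ HMC) as CF. fold F1 F2 F3 in CF.
  assert (IG1 : sideinj Γ1 (d x y)) by (apply (arc_inj d x y); auto).
  assert (IG2 : sideinj Γ2 (d y z)) by (apply (arc_inj d y z); auto).
  assert (IG3 : sideinj Γ3 (d z x)) by (apply (arc_inj d z x); auto).
  assert (IF1 : sideinj F1 (d x y)).
  { intros s s' Hs Hs' E.
    rewrite <- (pi1_Phi1 _ _ _ _ _ _ _ _ _ _ s HMC Hs), <- (pi1_Phi1 _ _ _ _ _ _ _ _ _ _ s' HMC Hs').
    fold F1. now rewrite E. }
  assert (IF2 : sideinj F2 (d y z)).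
  { intros s s' Hs Hs' E.
    rewrite <- (pi2_Phi2 _ _ _ _ _ _ _ _ _ _ s HMC Hs), <- (pi2_Phi2 _ _ _ _ _ _ _ _ _ _ s' HMC Hs').
    fold F2. now rewrite E. }
  assert (IF3 : sideinj F3 (d z x)).
  { intros s s' Hs Hs' E.
    rewrite <- (pi3_Phi3 _ _ _ _ _ _ _ _ _ _ s HMC Hs), <- (pi3_Phi3 _ _ _ _ _ _ _ _ _ _ s' HMC Hs').
    fold F3. now rewrite E. }
  pose proof (transfer _ _ _ F1 F2 F3 _ _ _ _ _ _ CG CF IG1 IG2 IG3) as TGF.
  pose proof (transfer _ _ _ Γ1 Γ2 Γ3 _ _ _ _ _ _ CF CG IF1 IF2 IF3) as TFG.
  pose proof (chmap_spec _ _ _ _ _ _ _ _ _ TGF) as Hf.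
  pose proof (chmap_spec _ _ _ _ _ _ _ _ _ TFG) as Hg.
  assert (HT : forall p, geod_triangle d x y z p <->
     exists k s, 0 <= s <= sel3 (d x y) (d y z) (d z x) k /\ p = sel3 Γ1 Γ2 Γ3 k s).
  { intros p. unfold geod_triangle.
    rewrite (seg_arc d x y g1 p Hc G1), (seg_arc d y z g2 p Hc G2), (seg_arc d z x g3 p Hc G3).
    split.
    - intros [(s & Hs & E)|[(s & Hs & E)|(s & Hs & E)]].
      + exists O, s. auto.
      + exists 1%nat, s. auto.
      + exists 2%nat, s. auto.
    - intros (k & s & Hs & E). destruct k as [|[|k]]; simpl in *; eauto. }
  exists (0,0), (sg,0), (0,sg), al, be, ga.
  split; [lra|split;[lra|split;[lra|]]].
  exists (chmap (d x y) (d y z) (d z x) Γ1 Γ2 Γ3 F1 F2 F3),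
         (chmap (d x y) (d y z) (d z x) F1 F2 F3 Γ1 Γ2 Γ3).
  split; [|split; [|split]].
  - intros p Hp. apply HT in Hp. destruct Hp as (k & s & Hs & ->).
    rewrite Hf by auto. split.
    + apply Phi_mem; auto.
    + rewrite Hg by auto. reflexivity.
  - intros u Hu. destruct (Phi_cover _ _ _ _ _ _ _ _ _ _ u HMC Hu) as (k & s & Hs & ->).
    fold F1 F2 F3. rewrite Hg by auto. split.
    + apply HT. eauto.
    + rewrite Hf; auto.
  - apply (cont_on_sub _ _ _ (fun a => exists k s, 0 <= s <= sel3 (d x y) (d y z) (d z x) k /\ a = sel3 Γ1 Γ2 Γ3 k s));
      [| intros p Hp; apply HT; exact Hp].
    apply (paste d dist5 _ Γ1 Γ2 Γ3 F1 F2 F3 (d x y) (d y z) (d z x) (2 + 2 * (w1 + w2 + w3))).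
    + lra.
    + auto.
    + exact Hf.
    + intros k s s' Hs Hs'. eapply Rle_trans; [apply dist5_le_N1|].
      pose proof (Rabs_pos (s - s')).
      destruct k as [|[|k]]; simpl in *; unfold Γ1, Γ2, Γ3; rewrite arc_iso by auto.
      * eapply Rle_trans; [apply Phi1_lip; auto|]. nra.
      * eapply Rle_trans; [apply Phi2_lip; auto|]. nra.
      * eapply Rle_trans; [apply Phi3_lip; auto|]. nra.
    + intros k a.
      destruct (classic (exists s0, 0 <= s0 <= sel3 (d x y) (d y z) (d z x) k /\ a = sel3 Γ1 Γ2 Γ3 k s0))
        as [E|Hn]; [left; auto|right].
      destruct (sep_min (fun t => d a (sel3 Γ1 Γ2 Γ3 k t)) (sel3 (d x y) (d y z) (d z x) k) 1)
        as (del & Hd & Hdel).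
      * destruct k as [|[|k]]; simpl; apply Hpos.
      * lra.
      * intros t t' Ht Ht'. eapply Rle_trans; [apply d_lip1; auto|].
        destruct k as [|[|k]]; simpl in *; unfold Γ1, Γ2, Γ3; rewrite arc_iso by auto; lra.
      * intros t Ht. destruct (Rle_lt_dec (d a (sel3 Γ1 Γ2 Γ3 k t)) 0) as [Z|Z]; auto.
        exfalso. apply Hn. exists t. split; auto. apply Hsep. pose proof (Hpos a (sel3 Γ1 Γ2 Γ3 k t)). lra.
      * exists del. split; auto.
  - apply (cont_on_sub _ _ _ (fun a => exists k s, 0 <= s <= sel3 (d x y) (d y z) (d z x) k /\ a = sel3 F1 F2 F3 k s));
      [| intros u Hu; apply (Phi_cover _ _ _ _ _ _ _ _ _ _ u HMC Hu)].
    set (L1 := d x y - al - be) in *. set (L2 := d y z - be - ga) in *. set (L3 := d z x - ga - al) in *.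
    apply (paste dist5 d _ F1 F2 F3 Γ1 Γ2 Γ3 (d x y) (d y z) (d z x) (5 * (2 + (L1 + L2 + L3)))).
    + lra.
    + apply dist5_pos.
    + exact Hg.
    + intros k s s' Hs Hs'.
      destruct k as [|[|k]]; cbn [sel3] in *; unfold Γ1, Γ2, Γ3; rewrite arc_iso by auto.
      * pose proof (pi1_lip al L1 (F1 s) (F1 s') HL1) as Hp.
        unfold F1, L1 in Hp. rewrite (pi1_Phi1 _ _ _ _ _ _ _ _ _ _ s HMC Hs),
          (pi1_Phi1 _ _ _ _ _ _ _ _ _ _ s' HMC Hs') in Hp. fold F1 L1 in Hp.
        pose proof (N1_le_dist5 (F1 s) (F1 s')). pose proof (N1_pos (F1 s) (F1 s')). nra.
      * pose proof (pi2_lip be L2 (F2 s) (F2 s') HL2) as Hp.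
        unfold F2, L2 in Hp. rewrite (pi2_Phi2 _ _ _ _ _ _ _ _ _ _ s HMC Hs),
          (pi2_Phi2 _ _ _ _ _ _ _ _ _ _ s' HMC Hs') in Hp. fold F2 L2 in Hp.
        pose proof (N1_le_dist5 (F2 s) (F2 s')). pose proof (N1_pos (F2 s) (F2 s')). nra.
      * pose proof (pi3_lip ga L3 sg (F3 s) (F3 s') HL3) as Hp.
        unfold F3, L3 in Hp. rewrite (pi3_Phi3 _ _ _ _ _ _ _ _ _ _ s HMC Hs),
          (pi3_Phi3 _ _ _ _ _ _ _ _ _ _ s' HMC Hs') in Hp. fold F3 L3 in Hp.
        pose proof (N1_le_dist5 (F3 s) (F3 s')). pose proof (N1_pos (F3 s) (F3 s')). nra.
    + intros k u.
      destruct (classic (exists s0, 0 <= s0 <= sel3 (d x y) (d y z) (d z x) k /\ u = sel3 F1 F2 F3 k s0))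
        as [E|Hn]; [left; auto|right].
      destruct (sep_min (fun t => N1 u (sel3 F1 F2 F3 k t)) (sel3 (d x y) (d y z) (d z x) k)
        (2 + 2 * (w1 + w2 + w3))) as (del & Hd & Hdel).
      * destruct k as [|[|k]]; simpl; apply Hpos.
      * lra.
      * intros t t' Ht Ht'. eapply Rle_trans; [apply N1_lip1|].
        pose proof (Rabs_pos (t - t')).
        destruct k as [|[|k]]; simpl in *.
        -- eapply Rle_trans; [apply Phi1_lip; auto|]. nra.
        -- eapply Rle_trans; [apply Phi2_lip; auto|]. nra.
        -- eapply Rle_trans; [apply Phi3_lip; auto|]. nra.
      * intros t Ht. destruct (Rle_lt_dec (N1 u (sel3 F1 F2 F3 k t)) 0) as [Z|Z]; auto.
        exfalso. apply Hn. exists t. split; auto. apply N1_zero.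
        pose proof (N1_pos u (sel3 F1 F2 F3 k t)). lra.
      * exists (del / 5). split; [lra|]. intros s Hs.
        specialize (Hdel s Hs). pose proof (N1_le_dist5 u (sel3 F1 F2 F3 k s)). cbv beta in Hdel. lra.
Qed.
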